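(* Let $G$ be a finite group and let $S$ be a partial rainbow on $G$. Then $S$ is a minimal generating set of the transfer system $\langle S\rangle$.
   Context: For a finite group $G$, an arrow is a pair $(K,H)$ of subgroups with $K\leqslant H$; it is an identity arrow if $K=H$. A $G$-transfer system is a set of arrows containing all identity arrows and closed under composition ($(A,B),(B,C)\Rightarrow(A,C)$), conjugation ($(A,B)\Rightarrow(gAg^{-1},gBg^{-1})$ for $g\in G$) and restriction ($(A,B)$ and $L\leqslant B\Rightarrow(A\cap L,L)$). For a set $S$ of non-identity arrows, $\langle S\rangle$ is the smallest transfer system containing $S$; $S$ is a minimal generating set of a transfer system $\mathsf{T}$ if $\langle S\rangle=\mathsf{T}$ and $\langle S\setminus\{s\}\rangle\neq\mathsf{T}$ for all $s\in S$. For a subgroup $K$, $P(K)$ denotes the sum of the exponents in the prime factorization of $|K|$. A rainbow on $\mathbb{N}$ is a finite set of pairs $\{(a_i,b_i)\}_{0\leqslant i\leqslant k}$ of natural numbers such that $i<j$ implies $a_i<a_j<b_j<b_i$. A partial rainbow on $G$ is a set $S$ of non-identity arrows such that (1) the set $\{(P(K),P(H)) : (K,H)\in S\}$ is a rainbow, and (2) for any $g\in G$ and $(K,H)\in S$, if $(gKg^{-1},gHg^{-1})\neq(K,H)$ then $(gKg^{-1},gHg^{-1})\notin S$. *)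

(* Defs.v *)
From mathcomp Require Import all_boot all_fingroup.
Set Implicit Arguments. Unset Strict Implicit. Unset Printing Implicit Defensive.
Local Open Scope group_scope.

(* An arrow (K, H) of subgroups of gT (components: a.1 = K, a.2 = H). *)
Notation arrow gT := ({group gT} * {group gT})%type.

Definition is_arrow (gT : finGroupType) (G : {group gT}) (a : arrow gT) : bool :=
  (a.1 \subset a.2) && (a.2 \subset G).

Definition conj_arrow (gT : finGroupType) (a : arrow gT) (g : gT) : arrow gT :=
  ((a.1 :^ g)%G, (a.2 :^ g)%G).

Definition transfer_system (gT : finGroupType) (G : {group gT})
    (T : {set arrow gT}) : bool :=
  [&& [forall a in T, is_arrow G a],
      [forall H : {group gT}, (H \subset G) ==> ((H, H) \in T)],
      [forall a in T, forall b in T, (a.2 == b.1) ==> ((a.1, b.2) \in T)],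
      [forall a in T, forall g in G, conj_arrow a g \in T] &
      [forall a in T, forall L : {group gT},
          (L \subset a.2) ==> (((a.1 :&: L)%G, L) \in T)]].

Definition gen_ts (gT : finGroupType) (G : {group gT}) (S : {set arrow gT})
    : {set arrow gT} :=
  [set a | [forall T : {set arrow gT},
              (transfer_system G T && (S \subset T)) ==> (a \in T)]].

Definition minimal_generating_set (gT : finGroupType) (G : {group gT})
    (S T : {set arrow gT}) : Prop :=
  [/\ forall a, a \in S -> is_arrow G a /\ a.1 != a.2,
      gen_ts G S = T &
      forall s, s \in S -> gen_ts G (S :\ s) != T].

Definition Pexp (gT : finGroupType) (K : {set gT}) : nat :=
  \sum_(p <- primes #|K|) logn p #|K|.

Definition rainbow (R : nat * nat -> Prop) : Prop :=
  exists s : seq (nat * nat),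
    [/\ 0 < size s,
        forall p, R p <-> p \in s &
        forall i j, i < j < size s ->
          let: (ai, bi) := nth (0, 0) s i in
          let: (aj, bj) := nth (0, 0) s j in
          [/\ ai < aj, aj < bj & bj < bi]].

Definition partial_rainbow (gT : finGroupType) (G : {group gT})
    (S : {set arrow gT}) : Prop :=
  [/\ forall a, a \in S -> is_arrow G a /\ a.1 != a.2,
      rainbow (fun p => exists2 a, a \in S & p = (Pexp a.1, Pexp a.2)) &
      forall g a, g \in G -> a \in S -> conj_arrow a g != a ->
        conj_arrow a g \notin S].

(* Main.v *)
Require Import Defs.
From mathcomp Require Import all_boot all_fingroup zify.
Set Implicit Arguments. Unset Strict Implicit. Unset Printing Implicit Defensive.
Local Open Scope group_scope.

Lemma f_iota n N : 0 < n -> n < N ->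
  \sum_(p <- primes n) logn p n = \sum_(p <- iota 0 N) logn p n.
Proof.
move=> n0 nN.
symmetry; rewrite (bigID [pred p | p \in primes n]) /= [X in _ + X]big1 ?addn0; last first.
  by move=> p; rewrite -logn_gt0 lt0n => /negPn/eqP.
rewrite -big_filter; symmetry; apply: perm_big; apply: uniq_perm.
- exact: primes_uniq.
- by rewrite filter_uniq // iota_uniq.
move=> p; rewrite mem_filter mem_iota /= add0n.
apply/idP/idP => [pn|/andP[] //]; rewrite pn /=.
move: pn; rewrite mem_primes => /and3P[_ _ pd].
exact: leq_ltn_trans (dvdn_leq n0 pd) nN.
Qed.

Lemma sum_eq_term (r : seq nat) (F G : nat -> nat) :
  (forall i, F i <= G i) -> \sum_(i <- r) G i <= \sum_(i <- r) F i ->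
  forall i, i \in r -> F i = G i.
Proof.
move=> le; elim: r => // a r IH; rewrite !big_cons => hs i.
have h1 : \sum_(i <- r) F i <= \sum_(i <- r) G i by apply: leq_sum.
have h2 := le a.
rewrite in_cons => /orP[/eqP->|ir]; first by lia.
apply: IH ir; lia.
Qed.

Lemma Pexp_conj (gT : finGroupType) (A : {set gT}) g : Pexp (A :^ g) = Pexp A.
Proof. by rewrite /Pexp cardJg. Qed.

Lemma Pexp_iota (gT : finGroupType) (A B : {group gT}) : A \subset B ->
  Pexp A = \sum_(p <- iota 0 #|B|.+1) logn p #|A| /\
  Pexp B = \sum_(p <- iota 0 #|B|.+1) logn p #|B|.
Proof.
move=> AB; rewrite /Pexp; split; apply: f_iota => //.
by rewrite ltnS subset_leq_card.
Qed.

Lemma Pexp_mono (gT : finGroupType) (A B : {group gT}) :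
  A \subset B -> Pexp A <= Pexp B.
Proof.
move=> AB; have [-> ->] := Pexp_iota AB.
apply: leq_sum => p _; apply: dvdn_leq_log => //; exact: cardSg.
Qed.

Lemma Pexp_eq (gT : finGroupType) (A B : {group gT}) :
  A \subset B -> Pexp B <= Pexp A -> A :=: B.
Proof.
move=> AB; have [-> ->] := Pexp_iota AB => le.
have le' : forall p, logn p #|A| <= logn p #|B|.
  by move=> p; apply: dvdn_leq_log => //; exact: cardSg.
have E := sum_eq_term le' le.
apply/eqP; rewrite eqEcard AB /=.
rewrite (@eqn_from_log #|A| #|B|) //.
move=> p /=; case: (ltnP p #|B|.+1) => pB.
  by apply: E; rewrite mem_iota.
have z : forall m, m %| #|B| -> logn p m = 0.
  move=> m mB; apply/eqP; rewrite -leqn0 leqNgt logn_gt0 mem_primes.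
  apply/negP => /and3P[_ m0 pm].
  have := dvdn_leq (cardG_gt0 B) (dvdn_trans pm mB); lia.
by rewrite z ?cardSg // z.
Qed.

Lemma connect_ind' (T : finType) (e : rel T) (P : T -> T -> Prop) :
  (forall x, P x x) -> (forall x y z, e x y -> P y z -> P x z) ->
  forall x y, connect e x y -> P x y.
Proof.
move=> P0 Ps x y /connectP [p] pth ->; elim: p x pth => [|z p IH] x //=.
by move=> /andP[exy pz]; exact: Ps exy (IH _ pz).
Qed.

Definition stepR (gT : finGroupType) (G : {group gT}) (S : {set arrow gT})
  : rel {group gT} :=
  fun A B => [exists x in S, exists g in G,
     (B \subset x.2 :^ g) && ((A : {set gT}) == x.1 :^ g :&: B)].

Definition TT (gT : finGroupType) (G : {group gT}) (S : {set arrow gT})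
  : {set arrow gT} :=
  [set a : arrow gT | (a.2 \subset G) && connect (stepR G S) a.1 a.2].

Section TS.
Variables (gT : finGroupType) (G : {group gT}) (S : {set arrow gT}).

Lemma connect_sub A B : connect (stepR G S) A B -> A \subset B.
Proof.
move: A B; apply: connect_ind' => // x y z.
move=> /existsP[a /andP[_ /existsP[g /andP[_ /andP[_ /eqP e]]]]] yz.
by rewrite e; apply: subset_trans (subsetIr _ _) yz.
Qed.

Lemma connect_conj g : g \in G -> forall A B, connect (stepR G S) A B ->
  connect (stepR G S) (A :^ g)%G (B :^ g)%G.
Proof.
move=> gG; apply: connect_ind' => // x y z xy yz.
apply: connect_trans yz; apply: connect1.
move: xy => /existsP[a /andP[aS /existsP[h /andP[hG /andP[sub /eqP e]]]]].
apply/existsP; exists a; rewrite aS; apply/existsP; exists (h * g).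
rewrite groupM //= conjsgM conjSg sub /= e conjIg conjsgM //.
Qed.

Lemma connect_restr (L : {group gT}) A B : connect (stepR G S) A B ->
  connect (stepR G S) (A :&: L)%G (B :&: L)%G.
Proof.
move: A B; apply: connect_ind' => // x y z xy yz.
apply: connect_trans yz; apply: connect1.
move: xy => /existsP[a /andP[aS /existsP[h /andP[hG /andP[sub /eqP e]]]]].
apply/existsP; exists a; rewrite aS; apply/existsP; exists h.
rewrite hG /= (subset_trans (subsetIl _ _) sub) /= e setIA //.
Qed.

Lemma TT_ts : S \subset [set a | is_arrow G a] -> transfer_system G (TT G S) /\ S \subset TT G S.
Proof.
move=> /subsetP SA; split; last first.
  apply/subsetP => a aS; have := SA a aS; rewrite !inE /is_arrow => /andP[a12 a2G].
  rewrite a2G /=; apply: connect1; apply/existsP; exists a; rewrite aS.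
  apply/existsP; exists 1; rewrite group1 !conjsg1 subxx /=.
  by apply/eqP; apply/esym/setIidPl.
apply/and5P; split.
- apply/forallP => a; apply/implyP; rewrite inE => /andP[aG c].
  by rewrite /is_arrow aG andbT; exact: connect_sub c.
- by apply/forallP => H; apply/implyP => HG; rewrite inE HG /= connect0.
- apply/forallP=> a; apply/implyP; rewrite inE=>/andP[aG ca].
  apply/forallP=> b; apply/implyP; rewrite inE => /andP[bG cb].
  apply/implyP => /eqP e; rewrite inE bG /=; apply: connect_trans ca _.
  by rewrite e.
- apply/forallP=> a; apply/implyP; rewrite inE=>/andP[aG ca].
  apply/forallP=> g; apply/implyP => gG; rewrite inE /conj_arrow /=.
  rewrite -(conjGid gG) conjSg aG /=; exact: connect_conj.
- apply/forallP=> a; apply/implyP; rewrite inE=>/andP[aG ca].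
  apply/forallP=> L; apply/implyP => La; rewrite inE /= (subset_trans La aG) /=.
  have H := connect_restr L ca.
  have E : (a.2 :&: L)%G = L by apply: val_inj; exact: setIidPr.
  by rewrite E in H.
Qed.
End TS.

Lemma rainbow_tri (gT : finGroupType) (S : {set arrow gT}) s x :
  rainbow (fun p => exists2 a, a \in S & p = (Pexp a.1, Pexp a.2)) ->
  s \in S -> x \in S ->
  (Pexp x.1 = Pexp s.1 /\ Pexp x.2 = Pexp s.2) \/ Pexp x.1 < Pexp s.1
  \/ Pexp x.2 < Pexp s.2.
Proof.
case=> sq [_ Hmem Hord] sS xS.
have ps : (Pexp s.1, Pexp s.2) \in sq by apply/Hmem; exists s.
have px : (Pexp x.1, Pexp x.2) \in sq by apply/Hmem; exists x.
have ri : index (Pexp s.1, Pexp s.2) sq < size sq by rewrite index_mem.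
have rj : index (Pexp x.1, Pexp x.2) sq < size sq by rewrite index_mem.
have ni := nth_index (0, 0) ps; have nj := nth_index (0, 0) px.
case: (ltngtP (index (Pexp s.1, Pexp s.2) sq) (index (Pexp x.1, Pexp x.2) sq)) => [lt|lt|eq].
- have := Hord _ _ (introT andP (conj lt rj)); rewrite ni nj => -[_ _ h].
  by right; right.
- have := Hord _ _ (introT andP (conj lt ri)); rewrite ni nj => -[h _ _].
  by right; left.
- left; have := congr1 (nth (0, 0) sq) eq; rewrite ni nj; by case=> -> ->.
Qed.

Theorem proposition3p3 (gT : finGroupType) (G : {group gT})
    (S : {set ({group gT} * {group gT})}) :
  partial_rainbow G S -> minimal_generating_set G S (gen_ts G S).
Proof.
move=> [Sarr Srb Sconj]; split => // s sS; apply/eqP => E.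
have s_gen : s \in gen_ts G S.
  by rewrite inE; apply/forallP => T; apply/implyP => /andP[_ /subsetP]; apply.
rewrite -E in s_gen.
have SA : S :\ s \subset [set a | is_arrow G a].
  by apply/subsetP => a; rewrite in_setD1 inE => /andP[_ /Sarr[]].
have [Tts sub] := TT_ts SA.
have sT : s \in TT G (S :\ s).
  by move: s_gen; rewrite inE => /forallP/(_ (TT G (S :\ s))); rewrite Tts sub.
have key : forall A B : {group gT}, connect (stepR G (S :\ s)) A B ->
    s.1 \subset A -> (B :=: s.2) -> (A :=: s.2).
  apply: connect_ind' => // A C B AC IH KA BH.
  have AsubC : A \subset C.
    by apply: connect_sub; apply: connect1; exact: AC.
  have CH := IH (subset_trans KA AsubC) BH.
  exfalso.
  move: AC => /existsP[x /andP[xS /existsP[g /andP[gG /andP[Hx /eqP e]]]]].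
  rewrite CH in Hx e.
  move: xS; rewrite in_setD1 => /andP[xs xS].
  have KA' : s.1 \subset x.1 :^ g by rewrite e in KA; exact: subset_trans KA (subsetIl _ _).
  have m1 := Pexp_mono (B := (x.1 :^ g)%G) KA'.
  have m2 := Pexp_mono (B := (x.2 :^ g)%G) Hx.
  rewrite /= Pexp_conj in m1; rewrite /= Pexp_conj in m2.
  case: (rainbow_tri Srb sS xS) => [[e1 e2]|[h|h]]; last 2 first.
  - by have := leq_ltn_trans m1 h; rewrite ltnn.
  - by have := leq_ltn_trans m2 h; rewrite ltnn.
  have H2 : s.2 :=: (x.2 :^ g)%G by apply: Pexp_eq => //=; rewrite Pexp_conj e2.
  have H1 : s.1 :=: (x.1 :^ g)%G by apply: Pexp_eq => //=; rewrite Pexp_conj e1.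
  have cs : conj_arrow x g = s.
    move: H1 H2; clear; case: s => K H /= H1 H2.
    by rewrite /conj_arrow; congr pair; apply: val_inj; rewrite /= -?H1 -?H2.
  case: (eqVneq (conj_arrow x g) x) => [csx | ne].
    by move: xs; rewrite -csx cs eqxx.
  by move: (Sconj g x gG xS ne) => /negP; apply; move: sS; rewrite -cs.
have := sT; rewrite inE => /andP[_ c].
have := key _ _ c (subxx _) erefl => e.
have [_ /negP] := Sarr s sS; apply; apply/eqP; exact: val_inj.
Qed.
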